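(* Let $\bm{\gamma}$ be a model such that $\bm{X}_{\bm{\gamma}}$ has full column rank, and let $\tilde{\bm{\gamma}}\subseteq\bm{\gamma}^*$ with $\tilde{\bm{\gamma}}\not\subseteq\bm{\gamma}$. Then $$\mu(\bm{\gamma}\cup\tilde{\bm{\gamma}},\bm{\gamma})\ge n\,\phi^{-1}\rho(\bm{X})\sum_{b=1}^B|\tilde{\bm{\gamma}}_b\setminus\bm{\gamma}_b|\min_{i\in\tilde{\bm{\gamma}}_b\setminus\bm{\gamma}_b}(\theta^*_i)^2,$$ where terms with $\tilde{\bm{\gamma}}_b\setminus\bm{\gamma}_b=\emptyset$ are zero.
   Context: $\bm{X}\in\mathbb{R}^{n\times p}$, $\bm{\theta}^*\in\mathbb{R}^p$, $\phi>0$, true support $\bm{\gamma}^*=\{j:\theta^*_j\ne0\}$; each index $j$ has a block label $z_j\in\{1,\ldots,B\}$ and for an index set $\bm{\gamma}$, $\bm{\gamma}_b=\{j\in\bm{\gamma}:z_j=b\}$. $\bm{X}_{\bm{\gamma}}$ denotes the columns indexed by $\bm{\gamma}$, $\bm{\theta}^*_{\bm{\gamma}}$ the corresponding entries, $P_{\bm{\gamma}}=\bm{X}_{\bm{\gamma}}(\bm{X}_{\bm{\gamma}}^T\bm{X}_{\bm{\gamma}})^{-1}\bm{X}_{\bm{\gamma}}^T$. For models $\bm{\gamma},\tilde{\bm{\gamma}}$: $\mu(\bm{\gamma},\tilde{\bm{\gamma}})=\phi^{-1}\|(I_n-P_{\tilde{\bm{\gamma}}})\bm{X}_{\bm{\gamma}\setminus\tilde{\bm{\gamma}}}\bm{\theta}^*_{\bm{\gamma}\setminus\tilde{\bm{\gamma}}}\|^2$.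 $\rho(\bm{X})=\min_{\bm{\gamma}:\bm{\gamma}\not\supseteq\bm{\gamma}^*}\lambda_{\min}\big(\tfrac1n\bm{X}_{\bm{\gamma}^*\setminus\bm{\gamma}}^T(I-P_{\bm{\gamma}})\bm{X}_{\bm{\gamma}^*\setminus\bm{\gamma}}\big)$, minimum over the considered models (those with $\bm{X}_{\bm{\gamma}}$ of full column rank), which include $\bm{\gamma}$. *)

(* Defs.v *)
From HB Require Import structures.
From mathcomp Require Import all_boot all_order all_algebra.
From mathcomp Require Import boolp classical_sets reals.
Set Implicit Arguments. Unset Strict Implicit. Unset Printing Implicit Defensive.
Import Order.TTheory GRing.Theory Num.Theory.
Local Open Scope ring_scope.
Local Open Scope classical_set_scope.

Section Defs.
Variable R : realType.
Variables (n p : nat).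

(* X_gamma : the columns of X indexed by gamma (in increasing index order). *)
Definition Xsub (X : 'M[R]_(n, p)) (g : {set 'I_p}) : 'M[R]_(n, #|g|) :=
  colsub (@enum_val _ (mem g)) X.

Definition thsub (th : 'cV[R]_p) (g : {set 'I_p}) : 'cV[R]_(#|g|) :=
  \col_(i < #|g|) th (enum_val i) 0.

Definition full_col_rank (X : 'M[R]_(n, p)) (g : {set 'I_p}) : bool :=
  \rank (Xsub X g) == #|g|.

Definition proj (X : 'M[R]_(n, p)) (g : {set 'I_p}) : 'M[R]_n :=
  Xsub X g *m invmx ((Xsub X g)^T *m Xsub X g) *m (Xsub X g)^T.

Definition sqnorm m (v : 'cV[R]_m) : R := \sum_(i < m) v i 0 ^+ 2.

Definition true_support (th : 'cV[R]_p) : {set 'I_p} := [set j | th j 0 != 0].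

Definition block B (z : 'I_p -> 'I_B) (g : {set 'I_p}) (b : 'I_B) : {set 'I_p} :=
  [set j in g | z j == b].

Definition mu (X : 'M[R]_(n, p)) (th : 'cV[R]_p) (phi : R)
    (g gt : {set 'I_p}) : R :=
  phi^-1 * sqnorm ((1%:M - proj X gt) *m (Xsub X (g :\: gt) *m thsub th (g :\: gt))).

Definition lambda_min m (A : 'M[R]_m) : R := inf [set a : R | eigenvalue A a].

Definition rho_mx (X : 'M[R]_(n, p)) (gs g : {set 'I_p}) : 'M[R]_(#|gs :\: g|) :=
  (n%:R)^-1 *: ((Xsub X (gs :\: g))^T *m (1%:M - proj X g) *m Xsub X (gs :\: g)).

Definition rho (X : 'M[R]_(n, p)) (th : 'cV[R]_p) : R :=
  inf [set lambda_min (rho_mx X (true_support th) g) |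
        g in [set g : {set 'I_p} | full_col_rank X g /\ ~~ (true_support th \subset g)]].

Definition min_sq (th : 'cV[R]_p) (S : {set 'I_p}) : R :=
  if S == finset.set0 then 0 else inf [set th i 0 ^+ 2 | i in [set i | i \in S]].

End Defs.

(* Main.v *)
Require Import Defs.
From HB Require Import structures.
From mathcomp Require Import all_boot all_order all_algebra.
From mathcomp Require Import boolp classical_sets reals.
From mathcomp Require Import ring lra.
Import Order.TTheory GRing.Theory Num.Theory.
Local Open Scope ring_scope.
Set Implicit Arguments. Unset Strict Implicit. Unset Printing Implicit Defensive.

Section LA.
Variable R : realType.
Local Open Scope classical_set_scope.

Definition qf m (M : 'M[R]_m) (v : 'rV[R]_m) : R := (v *m M *m v^T) 0 0.
Definition nrm m (v : 'rV[R]_m) : R := (v *m v^T) 0 0.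

Lemma nrmE m (v : 'rV[R]_m) : nrm v = \sum_i v 0 i ^+ 2.
Proof. by rewrite /nrm mxE; apply: eq_bigr => i _; rewrite mxE expr2. Qed.

Lemma nrm_ge0 m (v : 'rV[R]_m) : 0 <= nrm v.
Proof. by rewrite nrmE; apply: sumr_ge0 => i _; apply: sqr_ge0. Qed.

Lemma nrm_eq0 m (v : 'rV[R]_m) : (nrm v == 0) = (v == 0).
Proof.
apply/idP/idP => [|/eqP->]; last by rewrite nrmE big1 // => i _; rewrite mxE expr0n.
rewrite nrmE psumr_eq0 => [/allP H|i _]; last exact: sqr_ge0.
apply/eqP/rowP => i; rewrite mxE; apply/eqP; rewrite -sqrf_eq0.
by apply: (implyP (H i (mem_index_enum i))).
Qed.

Lemma coord_le_nrm m (v : 'rV[R]_m) i : v 0 i ^+ 2 <= nrm v.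
Proof.
rewrite nrmE (bigD1 i) //= lerDl; apply: sumr_ge0 => j _; exact: sqr_ge0.
Qed.

Lemma qfE m (M : 'M[R]_m) v : qf M v = \sum_i \sum_j v 0 i * M i j * v 0 j.
Proof.
rewrite /qf mxE exchange_big /=; apply: eq_bigr => j _.
rewrite [X in X * _]mxE [v^T _ _]mxE mulr_suml; apply: eq_bigr => i _; by [].
Qed.

Definition K m (M : 'M[R]_m) : R := \sum_i \sum_j `|M i j|.

Lemma K_ge0 m (M : 'M[R]_m) : 0 <= K M.
Proof. by apply: sumr_ge0 => i _; apply: sumr_ge0 => j _. Qed.

Lemma qf_bound m (M : 'M[R]_m) v : qf M v <= K M * nrm v.
Proof.
rewrite qfE /K mulr_suml; apply: ler_sum => i _; rewrite mulr_suml; apply: ler_sum => j _.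
have hi := coord_le_nrm v i; have hj := coord_le_nrm v j.
set a := v 0 i in hi *; set b := v 0 j in hj *; set c := M i j; set N := nrm v.
have : a * c * b <= `|c| * (`|a| * `|b|).
  rewrite (le_trans (ler_norm _)) // !normrM; lra.
move=> h; apply: (le_trans h); apply: ler_wpM2l => //.
have h1 : `|a| * `|b| <= (a ^+ 2 + b ^+ 2) / 2.
  have : 0 <= (`|a| - `|b|) ^+ 2 by apply: sqr_ge0.
  rewrite -[a ^+ 2]real_normK ?num_real // -[b ^+ 2]real_normK ?num_real //; lra.
move: h1 hi hj. set x := a ^+ 2. set y := b ^+ 2. set u := `|a| * `|b|. rewrite /N; lra.
Qed.

Lemma discr (a b c : R) : 0 <= c ->
  (forall t, 0 <= a + 2 * t * b + t ^+ 2 * c) -> b ^+ 2 <= a * c.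
Proof.
move=> c0 H; have [c00|cn0] := eqVneq c 0.
  rewrite c00 in H *.
  have [->|bn0] := eqVneq b 0; first by rewrite expr0n mulr0.
  have := H (- (a + 1) / (2 * b)).
  have -> : 2 * (- (a + 1) / (2 * b)) * b = - (a + 1).
    by field.
  lra.
have cp : 0 < c by rewrite lt_def cn0.
have := H (- b / c).
have -> : a + 2 * (- b / c) * b + (- b / c) ^+ 2 * c = (a * c - b ^+ 2) / c by field.
by rewrite pmulr_lge0 ?invr_gt0 // subr_ge0.
Qed.

Definition bil m (M : 'M[R]_m) (w v : 'rV[R]_m) : R := (w *m M *m v^T) 0 0.

Lemma e11 (A : 'M[R]_1) : A 0 0 = A^T 0 0.
Proof. by rewrite mxE. Qed.

Lemma bilC m (M : 'M[R]_m) w v : M^T = M -> bil M v w = bil M w v.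
Proof. by move=> sym; rewrite /bil e11 !trmx_mul trmxK sym mulmxA. Qed.

Lemma qf_add m (M : 'M[R]_m) w v t : M^T = M ->
  qf M (w + t *: v) = qf M w + 2 * t * bil M w v + t ^+ 2 * qf M v.
Proof.
move=> sym; rewrite /qf /bil.
have -> : (w + t *: v) *m M *m (w + t *: v)^T =
   w *m M *m w^T + t *: (w *m M *m v^T) + t *: (v *m M *m w^T) + t ^+ 2 *: (v *m M *m v^T).
  rewrite linearD /= linearZ /= !mulmxDl !mulmxDr -!scalemxAl -!scalemxAr scalerA -expr2.
  by rewrite !addrA [_ + t *: (v *m M *m w^T)]addrC !addrA.
have h : (v *m M *m w^T) 0 0 = (w *m M *m v^T) 0 0 := bilC w v sym.
move: h; set A1 := w *m M *m w^T; set A2 := w *m M *m v^T; set A3 := v *m M *m w^T; set A4 := v *m M *m v^T.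
rewrite !mxE => h; rewrite h; ring.
Qed.

Lemma cs m (M : 'M[R]_m) w v : M^T = M -> (forall x, 0 <= qf M x) ->
  bil M w v ^+ 2 <= qf M w * qf M v.
Proof.
move=> sym psd; apply: discr => // t.
by rewrite -qf_add.
Qed.

Lemma pd_bound m (B : 'M[R]_m) : B^T = B -> (forall x, 0 <= qf B x) ->
  B \in unitmx -> exists2 e, 0 < e & forall v, e * nrm v <= qf B v.
Proof.
move=> sym psd uB.
set K1 := K B; set K2 := K (invmx B *m (invmx B)^T).
have K10 : 0 <= K1 by apply: K_ge0.
have K20 : 0 <= K2 by apply: K_ge0.
exists (K2 * K1 + 1)^-1; first by rewrite invr_gt0; nra.
move=> v; set w := v *m B.
have h1 : nrm w = bil B w v.
  by rewrite /nrm /bil /w trmx_mul sym !mulmxA.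
have h2 : qf B w <= K1 * nrm w by apply: qf_bound.
have h3 := cs w v sym psd.
have q0 := psd v; have nw0 := nrm_ge0 w; have nv0 := nrm_ge0 v.
have h5 : nrm w <= K1 * qf B v.
  rewrite -h1 in h3.
  have h6 : nrm w ^+ 2 <= K1 * nrm w * qf B v.
    by apply: (le_trans h3); apply: ler_wpM2r.
  have [->|nwp] := eqVneq (nrm w) 0; first by nra.
  have nwp' : 0 < nrm w by rewrite lt_def nwp.
  nra.
have h4 : nrm v <= K2 * nrm w.
  have -> : v = w *m invmx B by rewrite /w mulmxK.
  have -> : nrm (w *m invmx B) = qf (invmx B *m (invmx B)^T) w.
    by rewrite /nrm /qf trmx_mul !mulmxA.
  exact: qf_bound.
rewrite ler_pdivrMl; last nra.
nra.
Qed.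

Lemma inf_ge0 (E : set R) : (forall x, E x -> 0 <= x) -> 0 <= inf E.
Proof.
move=> h; have [[x Ex]|nE] := pselect (exists x, E x).
  by apply: lb_le_inf; [exists x | move=> y /h].
by rewrite inf_out // => -[[x Ex] _]; apply: nE; exists x.
Qed.

Lemma nrm0 m : nrm (0 : 'rV[R]_m) = 0.
Proof. by apply/eqP; rewrite nrm_eq0. Qed.

Lemma nrm_gt0 m (v : 'rV[R]_m) : v != 0 -> 0 < nrm v.
Proof. by move=> vn0; rewrite lt_def nrm_eq0 vn0 nrm_ge0. Qed.

Lemma eig_ge0 m (A : 'M[R]_m) a : (forall x, 0 <= qf A x) -> eigenvalue A a -> 0 <= a.
Proof.
move=> psd /eigenvalueP [x xA xn0].
have := psd x; rewrite /qf xA -scalemxAl mxE -/(nrm x).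
by rewrite pmulr_lge0 // nrm_gt0.
Qed.

Lemma entryB (P Q : 'M[R]_1) c : (P - c *: Q) 0 0 = P 0 0 - c * Q 0 0.
Proof. by rewrite !mxE. Qed.

Lemma qf_shift m (A : 'M[R]_m) c x : qf (A - c%:M) x = qf A x - c * nrm x.
Proof.
by rewrite /qf /nrm mulmxBr mul_mx_scalar mulmxBl -scalemxAl entryB.
Qed.

Lemma rayleigh m (A : 'M[R]_m) v : A^T = A -> (forall x, 0 <= qf A x) ->
  inf [set a : R | eigenvalue A a] * nrm v <= qf A v.
Proof.
move=> sym psd.
have [->|vn0] := eqVneq v 0; first by rewrite nrm0 mulr0.
set S := [set r : R | exists2 x : 'rV[R]_m, x != 0 & r = qf A x / nrm x].
set c := inf S.
have lbS : lbound S 0.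
  move=> r [x xn0 ->]; apply: divr_ge0 => //; exact: nrm_ge0.
have hc : forall x, x != 0 -> c <= qf A x / nrm x.
  move=> x xn0; apply: (ge_inf (ex_intro _ 0 lbS)); by exists x.
have psdB : forall x, 0 <= qf (A - c%:M) x.
  move=> x; rewrite qf_shift subr_ge0.
  have [->|xn0] := eqVneq x 0; first by rewrite nrm0 mulr0.
  by rewrite -ler_pdivlMr ?nrm_gt0 // hc.
have symB : (A - c%:M)^T = A - c%:M by rewrite linearB /= tr_scalar_mx sym.
have eigc : eigenvalue A c.
  rewrite /eigenvalue /eigenspace /= kermx_eq0 row_free_unit.
  apply/negP => uB.
  have [e ep he] := pd_bound symB psdB uB.
  have : c + e <= c.
    apply: lb_le_inf; first by exists (qf A v / nrm v), v.
    move=> r [x xn0 ->]; rewrite ler_pdivlMr ?nrm_gt0 //.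
    have := he x; rewrite qf_shift; lra.
  lra.
have : inf [set a : R | eigenvalue A a] <= c.
  apply: ge_inf => //; exists 0 => a /=; exact: eig_ge0.
move=> h; rewrite -ler_pdivlMr ?nrm_gt0 //; apply: (le_trans h); exact: hc.
Qed.

Lemma lmin_ge0 m (A : 'M[R]_m) : (forall x, 0 <= qf A x) -> 0 <= inf [set a : R | eigenvalue A a].
Proof. move=> psd; apply: inf_ge0 => a; exact: eig_ge0. Qed.
End LA.

Section Main.
Variable R : realType.
Variables n p : nat.
Local Open Scope classical_set_scope.

Lemma proj_props (X : 'M[R]_(n, p)) g : full_col_rank X g ->
  (1%:M - proj X g)^T = 1%:M - proj X g /\
  (1%:M - proj X g) *m (1%:M - proj X g) = 1%:M - proj X g.
Proof.
move=> fcr; rewrite /proj; set Y := Xsub X g; set G := Y^T *m Y.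
have rfY : row_free Y^T by rewrite /row_free mxrank_tr.
have uG : G \in unitmx.
  rewrite -row_free_unit; apply: inj_row_free => v hv.
  have : nrm (v *m Y^T) = 0.
    by rewrite /nrm trmx_mul trmxK !mulmxA -(mulmxA v) -/G hv mul0mx mxE.
  by move/eqP; rewrite nrm_eq0 mulmx_free_eq0 // => /eqP.
have GT : G^T = G by rewrite /G trmx_mul trmxK.
set P := Y *m invmx G *m Y^T.
have PT : P^T = P by rewrite /P !trmx_mul trmxK trmx_inv GT mulmxA.
have PP : P *m P = P.
  by rewrite /P !mulmxA -(mulmxA (Y *m invmx G) Y^T Y) -/G -(mulmxA Y) mulVmx // mulmx1.
split; first by rewrite linearB /= trmx1 PT.
by rewrite mulmxBl mulmxBr !mul1mx mulmxBr mulmx1 PP subrr subr0.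
Qed.


Lemma entryZ (P : 'M[R]_1) c : (c *: P) 0 0 = c * P 0 0.
Proof. by rewrite mxE. Qed.

Lemma qfZ m (M : 'M[R]_m) c x : qf (c *: M) x = c * qf M x.
Proof. by rewrite /qf -scalemxAr -scalemxAl entryZ. Qed.

Lemma qf_gram k (Z : 'M[R]_(n, k)) (Q : 'M[R]_n) x : Q^T = Q -> Q *m Q = Q ->
  qf (Z^T *m Q *m Z) x = nrm (x *m Z^T *m Q).
Proof.
move=> QT QQ; rewrite /qf /nrm !trmx_mul QT trmxK !mulmxA.
by rewrite -(mulmxA (x *m Z^T) Q Q) QQ.
Qed.

Lemma rho_mx_props (X : 'M[R]_(n, p)) gs g : full_col_rank X g ->
  (rho_mx X gs g)^T = rho_mx X gs g /\ forall x, 0 <= qf (rho_mx X gs g) x.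
Proof.
move=> fcr; have [QT QQ] := proj_props fcr.
rewrite /rho_mx; split.
  by rewrite linearZ /= !trmx_mul trmxK QT mulmxA.
move=> x; rewrite qfZ qf_gram //; apply: mulr_ge0; last exact: nrm_ge0.
by rewrite invr_ge0 ler0n.
Qed.

End Main.

Section Mask.
Variable R : realType.
Variables n p : nat.
Local Open Scope classical_set_scope.

Definition mask (th : 'cV[R]_p) (S : {set 'I_p}) : 'cV[R]_p :=
  \col_i (if i \in S then th i 0 else 0).

Lemma Xsub_thsub (X : 'M[R]_(n, p)) th S :
  Xsub X S *m thsub th S = X *m mask th S.
Proof.
apply/colP => r; rewrite !mxE.
have -> : \sum_j Xsub X S r j * thsub th S j 0 =
   \sum_(k < #|S|) X r (enum_val k) * th (enum_val k) 0.
  by apply: eq_bigr => k _; rewrite !mxE.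
rewrite -(big_enum_val (fun i => X r i * th i 0)) big_mkcond /=.
by apply: eq_bigr => i _; rewrite !mxE; case: ifP; rewrite ?mulr0.
Qed.

Lemma thsub_nrm (th : 'cV[R]_p) (E : {set 'I_p}) : nrm (thsub th E)^T = \sum_(i in E) th i 0 ^+ 2.
Proof.
rewrite nrmE (big_enum_val (fun i => th i 0 ^+ 2)).
by apply: eq_bigr => k _; rewrite !mxE.
Qed.

Lemma sum_min_sq B (z : 'I_p -> 'I_B) (th : 'cV[R]_p) g gt :
  \sum_(b < B) #|block z gt b :\: block z g b|%:R * min_sq th (block z gt b :\: block z g b)
  <= \sum_(i in gt :\: g) th i 0 ^+ 2.
Proof.
rewrite (partition_big z predT) //=; apply: ler_sum => b _.
set Db := block z gt b :\: block z g b.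
have -> : \sum_(i | (i \in gt :\: g) && (z i == b)) th i 0 ^+ 2 = \sum_(i in Db) th i 0 ^+ 2.
  apply: eq_bigl => i; rewrite !inE.
  by case: (i \in g); case: (i \in gt); case: (z i == b).
rewrite /min_sq; case: eqP => [->|ne].
  by rewrite mulr0; apply: sumr_ge0 => i _; apply: sqr_ge0.
rewrite mulrC mulr_natr -sumr_const; apply: ler_sum => i iD.
apply: ge_inf; last by exists i.
by exists 0 => x [j _ <-]; apply: sqr_ge0.
Qed.
End Mask.

Lemma sqnorm_nrm (R : realType) m (v : 'cV[R]_m) : sqnorm v = nrm v^T.
Proof. by rewrite nrmE; apply: eq_bigr => i _; rewrite mxE. Qed.

Unset Implicit Arguments.

Theorem lemma2 (R : realType) (n p B : nat) (X : 'M[R]_(n, p)) (th : 'cV[R]_p)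
    (phi : R) (z : 'I_p -> 'I_B) (g gt : {set 'I_p}) :
  0 < phi ->
  full_col_rank X g ->
  gt \subset true_support th ->
  ~~ (gt \subset g) ->
  mu X th phi (g :|: gt) g >=
    n%:R * phi^-1 * rho X th *
      \sum_(b < B) #|block z gt b :\: block z g b|%:R *
                   min_sq th (block z gt b :\: block z g b).
Proof.
move=> phi0 fcr sub ngt.
have [symA psdA] := rho_mx_props (true_support th) fcr.
have [QT QQ] := proj_props fcr.
have DE : gt :\: g \subset true_support th :\: g.
  apply/fintype.subsetP => i; rewrite !inE => /andP[-> it] /=; by have := fintype.subsetP sub i it; rewrite inE.
set u := thsub (mask th (gt :\: g)) (true_support th :\: g).
have hXu : Xsub X ((g :|: gt) :\: g) *m thsub th ((g :|: gt) :\: g) =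
           Xsub X (true_support th :\: g) *m u.
  rewrite /u !Xsub_thsub; congr (X *m _); apply/colP => i; rewrite !mxE.
  move: (fintype.subsetP DE i); rewrite !inE.
  by case: (i \in g); case: (i \in gt) => //=; case: (th i 0 != 0) => // /(_ isT).
rewrite /mu hXu sqnorm_nrm trmx_mul trmx_mul QT -qf_gram //.
set q := qf _ _.
set S := \sum_(b < B) _.
have hS : S <= nrm u^T.
  rewrite /u thsub_nrm; apply: le_trans (sum_min_sq z th g gt) _.
  rewrite [leRHS]big_mkcond [leLHS]big_mkcond /=; apply: ler_sum => i _; rewrite mxE.
  have H := fintype.subsetP DE i.
  case iD: (i \in gt :\: g); case iE: (i \in true_support th :\: g) => //=.
    by move: (H iD); rewrite iE.
  by rewrite expr0n.
have q0 : 0 <= q by rewrite /q qf_gram //; apply: nrm_ge0.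
have phi0' : 0 <= phi^-1 by rewrite invr_ge0 ltW.
have [n0|n0] := eqVneq n 0%N.
  have -> : (n%:R : R) = 0 by rewrite n0.
  by rewrite !mul0r; apply: mulr_ge0.
set A := rho_mx X (true_support th) g.
have hq : q = n%:R * qf A u^T.
  by rewrite /A /rho_mx qfZ mulrA mulfV ?mul1r // pnatr_eq0.
have rho0 : 0 <= rho X th.
  apply: inf_ge0 => r [g' [fcr' _] <-].
  have [_ psd'] := rho_mx_props (true_support th) fcr'.
  exact: lmin_ge0.
have rhoA : rho X th <= lambda_min A.
  apply: ge_inf.
    exists 0 => r [g' [fcr' _] <-].
    have [_ psd'] := rho_mx_props (true_support th) fcr'.
    exact: lmin_ge0.
  exists g => //; split => //; apply/negP => h; apply/negP: ngt.
  by rewrite negbK; exact: fintype.subset_trans sub h.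
have ray := rayleigh u^T symA psdA.
have N0 := nrm_ge0 u^T.
have key : rho X th * S <= qf A u^T.
  apply: le_trans (ler_wpM2l rho0 hS) _.
  apply: le_trans ray; apply: ler_wpM2r => //.
rewrite hq.
have -> : n%:R / phi * rho X th * S = (n%:R / phi) * (rho X th * S) by rewrite mulrA.
have -> : phi^-1 * (n%:R * qf A u^T) = (n%:R / phi) * qf A u^T by rewrite mulrA [phi^-1 * _]mulrC.
apply: ler_wpM2l => //; apply: mulr_ge0 => //.
Qed.
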